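(* Given $x_0\in\mathbb{R}^{n_x}$ and a control $u\in U$, for every $t\in[0,T]$ the map $(y_1,\dots,y_T)\mapsto x(t)$ from $(\mathbb{R}^{n_y})^T$ to $\mathbb{R}^{n_x}$ is continuous, where $x$ denotes the solution of the hybrid system below starting at $x(0)=x_0$.
   Context: Fix positive integers $T,m,n_x,n_y$ and $\rho_{\max}\in(0,\infty)$; $B(0,\rho_{\max})$ is the closed Euclidean ball of radius $\rho_{\max}$ in $\mathbb{R}^m$; $U$ is the set of piecewise continuous $u:[0,T]\to\mathbb{R}^m$ with $\|u(t)\|_2\le\rho_{\max}$ for all $t$. $f:\mathbb{R}^{n_x}\times\mathbb{R}^m\to\mathbb{R}^{n_x}$ is continuously differentiable and there is $K_1\in[1,\infty)$ with $\|f(x',u')-f(x'',u'')\|_2\le K_1(\|x'-x''\|_2+\|u'-u''\|_2)$ for all $x',x''\in\mathbb{R}^{n_x}$, $u',u''\in B(0,\rho_{\max})$. $g:\mathbb{R}^{n_x}\times\mathbb{R}^{n_y}\to\mathbb{R}^{n_x}$ is continuous and differentiable in its first argument, and there are $K_2,\dots,K_5\ge0$ and positive integers $L_1,L_2$ such that for all $x,y$ both $\|g(x,y)\|_2$ and $\|\frac{\partial}{\partial x}g(x,y)\|_2$ are at most $K_2+K_3\|x\|_2^{L_1}+K_4\|y\|_2^{L_2}+K_5\|x\|_2^{L_1}\|y\|_2^{L_2}$. The hybrid system: $x_1$ on $[0,1]$ solves $\dot x_1=f(x_1,u)$, $x_1(0)=x_0$; for $i=2,\dots,T$, $x_i$ on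 $[i-1,i]$ solves $\dot x_i(t)=f(x_i(t),u(t))$ with $x_i(i-1)=g(x_{i-1}(i-1),y_{i-1})$; $x(t)=x_i(t)$ for $t\in[i-1,i)$, $i=1,\dots,T$, and $x(T)=g(x_T(T),y_T)$. *)

(* Defs.v *)
From HB Require Import structures.
From mathcomp Require Import all_boot all_order all_algebra.
From mathcomp Require Import all_classical all_reals all_analysis.
Set Implicit Arguments. Unset Strict Implicit. Unset Printing Implicit Defensive.
Import Order.TTheory GRing.Theory Num.Theory.
Import numFieldNormedType.Exports.
Local Open Scope classical_set_scope.
Local Open Scope ring_scope.

Section Defs.
Variable R : realType.

Definition enorm (n : nat) (v : 'rV[R]_n) : R :=
  Num.sqrt (\sum_(i < n) (v ord0 i) ^+ 2).

Definition piecewise_continuous (m : nat) (a b : R) (u : R -> 'rV[R]_m) : Prop :=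
  exists S : seq R,
    (forall t, a <= t <= b -> t \notin S ->
       u @ within [set x | a <= x <= b] (nbhs t) --> u t) /\
    (forall t, t \in S -> a <= t <= b ->
       (t < b -> cvg (u @ t^'+)) /\ (a < t -> cvg (u @ t^'-))).

(* z solves dz/dt = f(z,u) on [a,b]: z continuous on [a,b] and
   differentiable with z'(t) = f(z(t),u(t)) for all t in (a,b) outside a
   finite set (the usual notion for a piecewise continuous input u). *)
Definition ode_solution_on (nx m : nat) (f : 'rV[R]_nx -> 'rV[R]_m -> 'rV[R]_nx)
    (u : R -> 'rV[R]_m) (a b : R) (z : R -> 'rV[R]_nx) : Prop :=
  {within [set x | a <= x <= b], continuous z} /\
  exists S : seq R, forall t, a < t < b -> t \notin S ->
    is_derive t (1 : R) z (f (z t) (u t)).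

(* xs k is the piece x_{k+1} on [k, k+1] (k : 'I_T, i.e. i = k+1);
   y_{k+1} is the row k of the matrix Y : (R^ny)^T. *)
Definition hybrid_solution (T nx ny m : nat)
    (f : 'rV[R]_nx -> 'rV[R]_m -> 'rV[R]_nx) (g : 'rV[R]_nx -> 'rV[R]_ny -> 'rV[R]_nx)
    (u : R -> 'rV[R]_m) (x0 : 'rV[R]_nx) (Y : 'M[R]_(T, ny))
    (xs : 'I_T -> R -> 'rV[R]_nx) : Prop :=
  forall k : 'I_T,
    ode_solution_on f u k%:R (k%:R + 1) (xs k) /\
    (val k = 0%N -> xs k 0 = x0) /\
    (forall k' : 'I_T, val k = (val k').+1 ->
       xs k k%:R = g (xs k' k%:R) (row k' Y)).

(* the glued trajectory x(t): x(t) = x_i(t) on [i-1,i), x(T) = g(x_T(T), y_T) *)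
Definition hybrid_state (T nx ny : nat) (g : 'rV[R]_nx -> 'rV[R]_ny -> 'rV[R]_nx)
    (xs : 'I_T -> R -> 'rV[R]_nx) (Y : 'M[R]_(T, ny)) (t : R) : 'rV[R]_nx :=
  match [pick k : 'I_T | (k%:R <= t) && (t < k%:R + 1)] with
  | Some k => xs k t
  | None => match [pick k : 'I_T | k.+1 == T] with
            | Some k => g (xs k t) (row k Y)
            | None => 0
            end
  end.

End Defs.

(* Main.v *)
Require Import Defs.
From HB Require Import structures.
From mathcomp Require Import all_boot all_order all_algebra.
From mathcomp Require Import all_classical all_reals all_analysis.
From mathcomp Require Import lra.
Import Order.TTheory GRing.Theory Num.Theory.
Import numFieldNormedType.Exports.
Local Open Scope classical_set_scope.
Local Open Scope ring_scope.
Set Implicit Arguments. Unset Strict Implicit.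

Definition sqn (R : realType) n (v : 'rV[R]_n) : R := \sum_(i < n) (v ord0 i) ^+ 2.

Lemma sqn_ge0 (R : realType) n (v : 'rV[R]_n) : 0 <= sqn v.
Proof. by apply: sumr_ge0 => i _; apply: sqr_ge0. Qed.

Lemma enorm_sq (R : realType) n (v : 'rV[R]_n) : enorm v ^+ 2 = sqn v.
Proof. by rewrite /enorm sqr_sqrtr // sqn_ge0. Qed.

Lemma enorm0 (R : realType) n : enorm (0 : 'rV[R]_n) = 0.
Proof. by rewrite /enorm big1 ?sqrtr0 // => i _; rewrite mxE expr0n. Qed.

Lemma enorm_ge0 (R : realType) n (v : 'rV[R]_n) : 0 <= enorm v.
Proof. exact: sqrtr_ge0. Qed.

Lemma sqn_continuous (R : realType) n : continuous (@sqn R n).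
Proof.
move=> v; rewrite /sqn.
have -> : (fun w : 'rV[R]_n => \sum_(i < n) w ord0 i ^+ 2) =
   \sum_(i < n) (fun w : 'rV[R]_n => w ord0 i ^+ 2) by rewrite fct_sumE.
move: v; elim/big_ind: _ => [|f g cf cg|i _].
- by move=> v; exact: (@cst_continuous _ R 0).
- by move=> v; apply: continuousD; [apply: cf|apply: cg].
- have -> : (fun w : 'rV[R]_n => w ord0 i ^+ 2) =
     (fun w : 'rV[R]_n => w ord0 i) * (fun w : 'rV[R]_n => w ord0 i).
    by apply/funext => w; rewrite expr2.
  by move=> v; apply: continuousM; apply: coord_continuous.
Qed.

Lemma is_derive_coord (R : realType) n (z : R -> 'rV[R]_n) (t : R) (e : 'rV[R]_n) (i : 'I_n) :
  is_derive t (1:R) z e -> is_derive t (1:R) (fun s => z s ord0 i) (e ord0 i).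
Proof.
move=> dz; have dv : derivable z t (1:R) by case: dz.
apply: DeriveDef; first by move/derivable_mxP: dv.
have := derive_mx dv; rewrite derive_val => ->.
by rewrite mxE.
Qed.

Lemma is_derive_sqn (R : realType) n (z : R -> 'rV[R]_n) (t : R) (e : 'rV[R]_n) :
  is_derive t (1:R) z e ->
  is_derive t (1:R) (fun s => sqn (z s)) (\sum_(i < n) (2 * z t ord0 i * e ord0 i)).
Proof.
move=> dz; rewrite /sqn.
have -> : (fun s => \sum_(i < n) z s ord0 i ^+ 2) =
   \sum_(i < n) (fun s => z s ord0 i ^+ 2) by rewrite fct_sumE.
apply: is_derive_sum => i.
have := is_deriveX 2 (is_derive_coord i dz).
by rewrite /= expr1.
Qed.
Lemma is_derive_expRM (R : realType) (k x : R) :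
  is_derive x 1 (fun t => expR (k * t)) (k * expR (k * x)).
Proof.
have dl : derivable (fun t : R => k * t) x 1.
  by apply: ex_derive; apply: is_deriveZ.
have de : derivable (@expR R) (k * x) 1 by apply: ex_derive; apply: is_derive_expR.
apply: DeriveDef.
  apply/derivable1_diffP; apply: (@differentiable_comp _ _ _ _ (fun t : R => k * t) expR).
  exact/derivable1_diffP. exact/derivable1_diffP.
have := derive1_comp dl de.
rewrite /= !derive1E => ->.
have -> : 'D_1 (@expR R) (k * x) = expR (k * x) by apply: derive_val.
have -> : 'D_1 (fun t : R => k * t) x = k.
  have H := @is_deriveZ R R R id k x 1 1 (is_derive_id _ _).
  move: H; rewrite /= => H.
  by rewrite derive_val; exact: mulr1.
by rewrite mulrC.
Qed.
Lemma mono_exc (R : realType) (phi : R -> R) (a b : R) :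
  {within `[a, b], continuous phi} ->
  forall (S : seq R) (x y : R), a <= x -> x <= y -> y <= b ->
  (forall t, x < t < y -> t \notin S -> exists D, is_derive t 1 phi D /\ D <= 0) ->
  phi y <= phi x.
Proof.
move=> cphi S0.
suff H : forall n (S : seq R) (x y : R), (size S <= n)%N -> a <= x -> x <= y -> y <= b ->
  (forall t, x < t < y -> t \notin S -> exists D, is_derive t 1 phi D /\ D <= 0) ->
  phi y <= phi x by move=> x y; apply: (H (size S0) S0).
elim=> [|n IH] S x y hS ax xy yb hd.
  case: S hS hd => // _ hd.
  move: xy; rewrite le_eqVlt => /predU1P [->|xlty]; first by [].
  have hder : forall t, t \in `]x, y[ -> is_derive t 1 phi (derive1 phi t).
    move=> t txy; have /hd [] : x < t < y by rewrite !(itvP txy).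
      by [].
    by move=> D [dD _]; rewrite derive1E; apply: derivableP.
  have hc : {within `[x, y], continuous phi}.
    apply: continuous_subspaceW cphi; apply: subset_itv; rewrite bnd_simp //.
  have [c cxy E] := MVT xlty hder hc.
  rewrite -subr_le0 E; apply: mulr_le0_ge0; last by rewrite subr_ge0 ltW.
  have /hd [] : x < c < y by rewrite !(itvP cxy).
    by [].
  by move=> D [dD D0]; rewrite derive1E derive_val.
case: (boolP (has (fun s => x < s < y) S)) => [/hasP [s sS /andP [xs sy]]|hn].
  pose S' := seq.filter (predC1 s) S.
  have hS' : (size S' <= n)%N.
    rewrite size_filter -ltnS (leq_trans _ hS) //.
    rewrite -(count_predC (predC1 s) S) -addn1 leq_add2l.
    have : has (predC (predC1 s)) S by apply/hasP; exists s => //=; rewrite eqxx.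
    by rewrite has_count.
  have memS' t : t \notin S' -> t != s -> t \notin S.
    by rewrite mem_filter /= => /negP H1 ts; apply/negP => tS; apply: H1; rewrite ts.
  apply: (@le_trans _ _ (phi s)).
    apply: (IH S') => //; first by rewrite (le_trans ax) // ltW.
      by rewrite ltW.
    move=> t /andP [st ty] tS; apply: hd; first by rewrite ty (lt_trans xs).
    by apply: memS' => //; rewrite gt_eqF.
  apply: (IH S') => //; first by rewrite ltW.
    by rewrite (le_trans _ yb) // ltW.
  move=> t /andP [xt ts] tS; apply: hd; first by rewrite xt (lt_trans ts).
  by apply: memS' => //; rewrite lt_eqF.
move: xy; rewrite le_eqVlt => /predU1P [->|xlty]; first by [].
have nS t : x < t < y -> t \notin S.
  move=> ht; apply/negP => tS; move/hasP: hn; apply; by exists t.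
have hder : forall t, t \in `]x, y[ -> is_derive t 1 phi (derive1 phi t).
  move=> t txy; have txy' : x < t < y by rewrite !(itvP txy).
  have [D [dD _]] := hd t txy' (nS t txy').
  by rewrite derive1E; apply: derivableP.
have hc : {within `[x, y], continuous phi}.
  apply: continuous_subspaceW cphi; apply: subset_itv; rewrite bnd_simp //.
have [c cxy E] := MVT xlty hder hc.
rewrite -subr_le0 E; apply: mulr_le0_ge0; last by rewrite subr_ge0 ltW.
have cxy' : x < c < y by rewrite !(itvP cxy).
have [D [dD D0]] := hd c cxy' (nS c cxy').
by rewrite derive1E (derive_val).
Qed.

Lemma gron (R : realType) nx m (f : 'rV[R]_nx -> 'rV[R]_m -> 'rV[R]_nx)
  (u : R -> 'rV[R]_m) (rho K1 : R)
  (hf_lip : forall (x' x'' : 'rV[R]_nx) (u' u'' : 'rV[R]_m),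
      enorm u' <= rho -> enorm u'' <= rho ->
      enorm (f x' u' - f x'' u'') <= K1 * (enorm (x' - x'') + enorm (u' - u'')))
  (a b : R) (hu : forall t, a <= t <= b -> enorm (u t) <= rho)
  (z1 z2 : R -> 'rV[R]_nx) :
  ode_solution_on f u a b z1 -> ode_solution_on f u a b z2 ->
  forall t, a <= t <= b ->
  sqn (z1 t - z2 t) <= expR ((1 + K1 ^+ 2) * t) * (expR (- ((1 + K1 ^+ 2) * a)) * sqn (z1 a - z2 a)).
Proof.
move=> [c1 [S1 d1]] [c2 [S2 d2]] t /andP [hat htb].
set C := 1 + K1 ^+ 2.
pose d s := z1 s - z2 s.
pose phi s := expR (- C * s) * sqn (d s).
have cphi : {within `[a, b], continuous phi}.
  rewrite set_itvcc => s.
  apply: (@continuousM R (subspace [set z | a <= z <= b]) (fun s => expR (- C * s)) (fun s => sqn (d s)) s).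
    apply: continuous_subspaceT => r.
    apply: continuous_comp; last exact: continuous_expR.
    by apply: continuousM; [apply: cst_continuous|apply: cvg_id].
  apply: continuous_comp; last exact: sqn_continuous.
  by apply: continuousB; [apply: c1|apply: c2].
have key : phi t <= phi a.
  apply: (@mono_exc R phi a b cphi (S1 ++ S2) a t (lexx a) hat htb) => s /andP [hs st] sS.
  rewrite mem_cat negb_or in sS; case/andP: sS => s1 s2.
  have sab : a < s < b by rewrite hs (lt_le_trans st htb).
  have dd := is_deriveB (d1 s sab s1) (d2 s sab s2).
  have ds := is_derive_sqn dd.
  have de := is_derive_expRM (-C) s.
  have dp := is_deriveM de ds.
  eexists; split; first exact: dp.
  set e := f (z1 s) (u s) - f (z2 s) (u s).
  have -> : (z1 - z2) s = z1 s - z2 s by [].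
  set dv := z1 s - z2 s.
  have hsq : \sum_(i < nx) 2 * dv ord0 i * e ord0 i <= sqn dv + sqn e.
    rewrite /sqn -big_split /=; apply: ler_sum => i _.
    have := sqr_ge0 (dv ord0 i - e ord0 i); nra.
  have he : sqn e <= K1 ^+ 2 * sqn dv.
    rewrite -!enorm_sq.
    have hus : enorm (u s) <= rho by apply: hu; rewrite !ltW //; case/andP: sab.
    have h1 := hf_lip (z1 s) (z2 s) (u s) (u s) hus hus.
    rewrite subrr enorm0 addr0 in h1.
    rewrite -exprMn; apply: ler_pM => //; exact: enorm_ge0.
  have E0 : 0 < expR (- C * s) := expR_gt0 _.
  rewrite /GRing.scale /=.
  have hX : \sum_(i < nx) 2 * dv ord0 i * e ord0 i <= C * sqn dv.
    rewrite /C mulrDl mul1r; lra.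
  have := mulr_ge0 (ltW E0) (_ : 0 <= C * sqn dv - \sum_(i < nx) 2 * dv ord0 i * e ord0 i).
  move=> /(_ ltac:(lra)) H; nra.
have e1 : expR (C * t) * expR (- C * t) = 1 by rewrite -expRD mulNr addrN expR0.
rewrite -mulNr.
have := ler_wpM2l (ltW (expR_gt0 (C * t))) key.
rewrite /phi /d => H; apply: le_trans H; by rewrite mulrA e1 mul1r.
Qed.

Lemma sqnN (R : realType) n (v : 'rV[R]_n) : sqn (- v) = sqn v.
Proof. by apply: eq_bigr => i _; rewrite mxE sqrrN. Qed.

Lemma sqn0 (R : realType) n : sqn (0 : 'rV[R]_n) = 0.
Proof. by rewrite /sqn big1 // => i _; rewrite mxE expr0n. Qed.

Lemma coord_le_sqn (R : realType) n (v : 'rV[R]_n) j : v ord0 j ^+ 2 <= sqn v.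
Proof.
rewrite /sqn (bigD1 j) //= lerDl; apply: sumr_ge0 => i _; exact: sqr_ge0.
Qed.

Lemma norm_lt_sqn (R : realType) n (v : 'rV[R]_n) (eps : R) :
  0 < eps -> sqn v < eps ^+ 2 -> `|v| < eps.
Proof.
move=> e0 hv.
rewrite /Num.Def.normr /= mx_normrE.
apply: bigmax_lt => // -[i j] _ /=.
have -> : i = ord0 by apply/val_inj; case: i => -[].
have h := le_lt_trans (coord_le_sqn v j) hv.
rewrite -real_normK ?num_real // in h.
have n0 := normr_ge0 (v ord0 j).
rewrite ltNge; apply/negP => H.
have : eps ^+ 2 <= `|v ord0 j| ^+ 2 by rewrite ler_pXn2r // nnegrE ?ltW.
by rewrite leNgt h.
Qed.

Lemma coords_sqn_near (R : realType) (T : topologicalType) n (F : T -> 'rV[R]_n) (Y0 : T) :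
  (forall i, {for Y0, continuous (fun Y => F Y ord0 i)}) ->
  forall eps : R, 0 < eps -> \forall Y \near Y0, sqn (F Y - F Y0) < eps.
Proof.
move=> hF eps e0.
have hc : {for Y0, continuous (fun Y => sqn (F Y - F Y0))}.
  rewrite /sqn.
  have -> : (fun Y => \sum_(i < n) (F Y - F Y0) ord0 i ^+ 2) =
     \sum_(i < n) (fun Y => (F Y ord0 i - F Y0 ord0 i) ^+ 2).
    by rewrite fct_sumE; apply/funext => Y; apply: eq_bigr => i _; rewrite !mxE.
  elim/big_ind: _ => [|f g cf cg|i _].
  - exact: (@cst_continuous _ R 0).
  - by apply: continuousD.
  - have -> : (fun Y => (F Y ord0 i - F Y0 ord0 i) ^+ 2) =
       (fun Y => F Y ord0 i - F Y0 ord0 i) * (fun Y => F Y ord0 i - F Y0 ord0 i).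
      by apply/funext => w; rewrite expr2.
    apply: continuousM; apply: continuousB => //; exact: cst_continuous.
have hc2 : sqn (F Y - F Y0) @[Y --> Y0] --> sqn (F Y0 - F Y0) := hc.
move: hc2; rewrite subrr sqn0 => /cvgrPdist_lt /(_ eps e0).
apply: filterS => Y; rewrite sub0r normrN => H.
exact: le_lt_trans (ler_norm _) H.
Qed.

Lemma sqn_contP (R : realType) (T : topologicalType) n (F : T -> 'rV[R]_n) (Y0 : T) :
  {for Y0, continuous F} <->
  (forall eps : R, 0 < eps -> \forall Y \near Y0, sqn (F Y - F Y0) < eps).
Proof.
split.
  move=> hF; apply: coords_sqn_near => i.
  exact: (continuous_comp hF (@coord_continuous R 1 n ord0 i (F Y0))).
move=> H; apply/cvgrPdist_lt => eps e0.
apply: filterS (H (eps ^+ 2) (exprn_gt0 2 e0)) => Y hY.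
by apply: norm_lt_sqn => //; rewrite -sqnN opprB.
Qed.

Lemma step_cont (R : realType) nx m (f : 'rV[R]_nx -> 'rV[R]_m -> 'rV[R]_nx)
  (u : R -> 'rV[R]_m) (rho K1 : R)
  (hf_lip : forall (x' x'' : 'rV[R]_nx) (u' u'' : 'rV[R]_m),
      enorm u' <= rho -> enorm u'' <= rho ->
      enorm (f x' u' - f x'' u'') <= K1 * (enorm (x' - x'') + enorm (u' - u'')))
  (MT : topologicalType) (a b : R) (hu : forall t, a <= t <= b -> enorm (u t) <= rho)
  (z : MT -> R -> 'rV[R]_nx) (hz : forall Y, ode_solution_on f u a b (z Y)) (Y0 : MT) :
  {for Y0, continuous (fun Y => z Y a)} ->
  forall s, a <= s <= b -> {for Y0, continuous (fun Y => z Y s)}.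
Proof.
move=> ha s hs; apply/sqn_contP => eps e0.
set M := expR ((1 + K1 ^+ 2) * s) * expR (- ((1 + K1 ^+ 2) * a)).
have M0 : 0 < M by rewrite mulr_gt0 // expR_gt0.
move/sqn_contP: ha => /(_ (eps / M) (divr_gt0 e0 M0)).
apply: filterS => Y hY.
have := gron hf_lip hu (hz Y) (hz Y0) hs.
rewrite mulrA -/M => H; apply: le_lt_trans H _.
by rewrite -ltr_pdivlMl // mulrC.
Qed.
Theorem proposition5 (R : realType) (T m nx ny : nat)
  (hT : (0 < T)%N) (hm : (0 < m)%N) (hnx : (0 < nx)%N) (hny : (0 < ny)%N)
  (rho_max : R) (hrho : 0 < rho_max)
  (f : 'rV[R]_nx -> 'rV[R]_m -> 'rV[R]_nx)
  (hf_diff : forall p : 'rV[R]_nx * 'rV[R]_m,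
      differentiable (fun q : 'rV[R]_nx * 'rV[R]_m => f q.1 q.2) p)
  (hf_C1 : forall v : 'rV[R]_nx * 'rV[R]_m,
      continuous (fun p : 'rV[R]_nx * 'rV[R]_m =>
        'd (fun q : 'rV[R]_nx * 'rV[R]_m => f q.1 q.2) p v))
  (K1 : R) (hK1 : 1 <= K1)
  (hf_lip : forall (x' x'' : 'rV[R]_nx) (u' u'' : 'rV[R]_m),
      enorm u' <= rho_max -> enorm u'' <= rho_max ->
      enorm (f x' u' - f x'' u'') <= K1 * (enorm (x' - x'') + enorm (u' - u'')))
  (g : 'rV[R]_nx -> 'rV[R]_ny -> 'rV[R]_nx)
  (hg_cont : continuous (fun p : 'rV[R]_nx * 'rV[R]_ny => g p.1 p.2))
  (hg_diff : forall (x : 'rV[R]_nx) (y : 'rV[R]_ny), differentiable (g^~ y) x)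
  (K2 K3 K4 K5 : R) (hK2 : 0 <= K2) (hK3 : 0 <= K3) (hK4 : 0 <= K4) (hK5 : 0 <= K5)
  (L1 L2 : nat) (hL1 : (0 < L1)%N) (hL2 : (0 < L2)%N)
  (hg_bound : forall (x : 'rV[R]_nx) (y : 'rV[R]_ny),
      enorm (g x y) <= K2 + K3 * enorm x ^+ L1 + K4 * enorm y ^+ L2
                        + K5 * enorm x ^+ L1 * enorm y ^+ L2)
  (hdg_bound : forall (x : 'rV[R]_nx) (y : 'rV[R]_ny) (v : 'rV[R]_nx),
      enorm ('d (g^~ y) x v) <= (K2 + K3 * enorm x ^+ L1 + K4 * enorm y ^+ L2
                        + K5 * enorm x ^+ L1 * enorm y ^+ L2) * enorm v)
  (x0 : 'rV[R]_nx) (u : R -> 'rV[R]_m)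
  (hu_pc : piecewise_continuous 0 T%:R u)
  (hu_bound : forall t, 0 <= t <= T%:R -> enorm (u t) <= rho_max)
  (xs : 'M[R]_(T, ny) -> 'I_T -> R -> 'rV[R]_nx)
  (hxs : forall Y : 'M[R]_(T, ny), hybrid_solution f g u x0 Y (xs Y)) :
  forall t : R, 0 <= t <= T%:R ->
    continuous (fun Y : 'M[R]_(T, ny) => hybrid_state g (xs Y) Y t).
Proof.
move=> t /andP [t0 tT].
have rowc : forall (k : 'I_T) (Y0 : 'M[R]_(T, ny)), {for Y0, continuous (fun Y : 'M[R]_(T, ny) => row k Y)}.
  move=> k Y0; apply/sqn_contP; apply: coords_sqn_near => j.
  have -> : (fun Y : 'M[R]_(T, ny) => row k Y ord0 j) = (fun Y => Y k j).
    by apply/funext => Y; rewrite mxE.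
  exact: coord_continuous.
have gc : forall (p : 'M[R]_(T, ny) -> 'rV[R]_nx) (k : 'I_T) Y0,
    {for Y0, continuous p} -> {for Y0, continuous (fun Y => g (p Y) (row k Y))}.
  move=> p k Y0 hp.
  exact: (continuous_comp (cvg_pair hp (rowc k Y0)) (hg_cont (p Y0, row k Y0))).
have hu' : forall (n : nat), (n < T)%N -> forall s, n%:R <= s <= n%:R + 1 -> enorm (u s) <= rho_max.
  move=> n hn s /andP [h1 h2]; apply: hu_bound; apply/andP; split.
    by apply: le_trans h1.
  apply: (le_trans h2); rewrite natr1 ler_nat //.
have P : forall n (hn : (n < T)%N) s, n%:R <= s <= n%:R + 1 ->
    continuous (fun Y => xs Y (Ordinal hn) s).
  elim=> [|n IH] hn s hs Y0.
    apply: (step_cont hf_lip (hu' 0%N hn) (z := fun Y => xs Y (Ordinal hn))) => //.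
      by move=> Y; exact: (hxs Y (Ordinal hn)).1.
    have -> : (fun Y => xs Y (Ordinal hn) 0%:R) = (fun _ => x0).
      by apply/funext => Y; exact: (hxs Y (Ordinal hn)).2.1.
    exact: cst_continuous.
  apply: (step_cont hf_lip (hu' n.+1 hn) (z := fun Y => xs Y (Ordinal hn))) => //.
    by move=> Y; exact: (hxs Y (Ordinal hn)).1.
  have hn' : (n < T)%N by apply: ltnW.
  have -> : (fun Y => xs Y (Ordinal hn) n.+1%:R) =
      (fun Y => g (xs Y (Ordinal hn') n.+1%:R) (row (Ordinal hn') Y)).
    by apply/funext => Y; exact: ((hxs Y (Ordinal hn)).2.2 (Ordinal hn') erefl).
  apply: gc; apply: IH.
  by rewrite natr1 lexx andbT ler_nat.
rewrite /hybrid_state.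
case: pickP => [[n hn] /andP [h1 h2] | hnone].
  by apply: P; rewrite h1 ltW.
case: pickP => [[n hn] /eqP hk | _]; last by apply: cst_continuous.
have tge : forall j, (j <= T)%N -> j%:R <= t.
  elim=> [|j IH] hj; first by [].
  have := hnone (Ordinal hj); rewrite /= IH ?(ltnW hj) //= => /negbT.
  by rewrite -leNgt natr1.
have tT' : t = T%:R by apply/eqP; rewrite eq_le tT tge.
move=> Y0; apply: gc; apply: P.
by rewrite tT' -hk natr1 lexx ler_nat leqnSn.
Qed.
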